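(* Let $G$ be a probability distribution on $\mathbb{R}^d$, let $w\ge 1$ and $T\ge 1$ be integers, set $\psi = 2^w$ and $L = Tw$. For $t=1,\dots,T$, let $\mathcal{D}^t=(\mathbf{s}^t_1,\dots,\mathbf{s}^t_\psi)$ be drawn i.i.d. from $G$, independently across $t$. For $\mathbf{x}\in\mathbb{R}^d$ define the hash functions $h^t_i(\mathbf{x}) = 1$ if $\mathbf{s}^t_i$ is the nearest point of $\mathcal{D}^t$ to $\mathbf{x}$ in Euclidean distance and $h^t_i(\mathbf{x})=0$ otherwise, where ties are broken by assigning $\mathbf{x}$ to one of the nearest points chosen uniformly at random (independently of everything else), so exactly one $h^t_i(\mathbf{x})$ equals $1$; let $i_t(\mathbf{x})$ denote that index. Define the encoded bits $$e^t_j(\mathbf{x}) = \left\lfloor \frac{i_t(\mathbf{x})}{2^{j-1}} \right\rfloor \bmod 2, \qquad j=1,\dots,w,$$ the $w$-bit vector $b^t(\mathbf{x}) = [e^t_1(\mathbf{x}),\dots,e^t_w(\mathbf{x})]$, and the $L$-bit code $\mathcal{B}(\mathbf{x}) = [b^1(\mathbf{x}),\dots,b^T(\mathbf{x})]$. Then for every fixed $\mathbf{x}\in\mathbb{R}^d$, the $L$ bits of $\mathcal{B}(\mathbf{x})$, viewed as random variables over the draws of $\mathcal{D}^1,\dots,\mathcal{D}^T$ (and tie-breaking), are mutually independent: for all values $v_1,\dots,v_L\in\{0,1\}$, the probability that the bits equal $v_1,\dots,v_L$ equals the product of the individual probabilities that each bit takes its value.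
   Context: This is the Voronoi Diagram Encoded Hashing (VDeH) scheme: each of the $T=L/w$ independently sampled Voronoi diagrams with $\psi=2^w$ cells is turned into $w$ bits by binary-encoding the index of the cell containing $\mathbf{x}$, and the $T$ resulting $w$-bit blocks are concatenated. *)

(* Defs.v *)
From HB Require Import structures.
From mathcomp Require Import all_boot all_order all_algebra all_fingroup.
From mathcomp Require Import all_classical all_reals all_analysis.

Set Implicit Arguments.
Unset Strict Implicit.
Unset Printing Implicit Defensive.

Import Order.TTheory GRing.Theory Num.Theory.
Local Open Scope classical_set_scope.
Local Open Scope ring_scope.

(* Points of R^d are represented as d.-tuple R, which carries the product
   (= Borel) sigma-algebra from MathComp-Analysis. *)

Definition eucl_dist (R : realType) (d : nat) (x y : d.-tuple R) : R :=
  Num.sqrt (\sum_(k < d) (tnth x k - tnth y k) ^+ 2).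

Definition mutually_independent (R : realType) (dO : measure_display)
    (Omega : measurableType dO) (P : probability Omega R)
    (K : finType) (E : K -> set (set Omega)) : Prop :=
  forall (J : {set K}) (A : K -> set Omega),
    (forall k, k \in J -> E k (A k)) ->
    P (\bigcap_(k in [set k | k \in J]) A k) = (\prod_(k in J) P (A k))%E.

Definition nearest_set (R : realType) (d psi : nat) (x : d.-tuple R)
    (D : 'I_psi -> d.-tuple R) : {set 'I_psi} :=
  [set i | [forall k, eucl_dist x (D i) <= eucl_dist x (D k)]].

(* Uniform random tie-breaking is implemented by a uniformly random priority
   permutation sigma (independent of everything else): among the nearest
   points, the one of smallest priority is chosen.  Conditionally on the
   samples, this choice is uniform over the set of nearest points.
   The result is the paper's 1-based index i_t(x) in {1,...,psi}
   (0 is an unreachable default, the nearest set being nonempty). *)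
Definition chosen_index (R : realType) (d psi : nat) (x : d.-tuple R)
    (D : 'I_psi -> d.-tuple R) (sigma : {perm 'I_psi}) : nat :=
  match [pick i in nearest_set x D |
           [forall k in nearest_set x D, (sigma i <= sigma k)%N]] with
  | Some i => (val i).+1
  | None => 0%N
  end.

Definition enc_bit (i j : nat) : bool := odd (i %/ 2 ^ j.-1).

(* The L = T*w bit code B(x) = [b^1(x), ..., b^T(x)], b^t = [e^t_1, ..., e^t_w]:
   the (0-based) position l corresponds to block t = l / w (0-based) and bit
   j = (l mod w) + 1. *)
Definition code_bit (R : realType) (d w T : nat) (x : d.-tuple R)
    (s : 'I_T -> 'I_(2 ^ w) -> d.-tuple R) (sigma : 'I_T -> {perm 'I_(2 ^ w)})
    (l : 'I_(T * w)) : bool :=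
  match insub (l %/ w)%N with
  | Some t => enc_bit (chosen_index x (s t) (sigma t)) (l %% w).+1
  | None => false
  end.

(* Main.v *)
Require Import Defs.
From HB Require Import structures.
From mathcomp Require Import all_boot all_order all_algebra all_fingroup.
From mathcomp Require Import all_classical all_reals all_analysis.
From mathcomp Require Import zify.

Import Order.TTheory GRing.Theory Num.Theory.

Definition rvec (K : finType) (R : realType) := K -> R.
HB.instance Definition _ K R := gen_eqMixin (rvec K R).
HB.instance Definition _ K R := gen_choiceMixin (rvec K R).
HB.instance Definition _ K R := isPointed.Build (rvec K R) (fun _ => 0%R).

Section part1.
Local Open Scope classical_set_scope.
Local Open Scope ring_scope.


Definition rect (R : realType) (K : finType) : set (set (rvec K R)) :=
  [set [set y | forall k, A k (y k)] | A in [set A : K -> set R | forall k, measurable (A k)]].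

Definition MV (R : realType) (K : finType) := g_sigma_algebraType (rect R K).

Section gen.
Variables (R : realType) (K : finType).
Local Notation M := (MV R K).

Lemma rectI : setI_closed (rect R K).
Proof.
move=> _ _ [A mA <-] [B mB <-]; exists (fun k => A k `&` B k).
  by move=> k; apply: measurableI.
by apply/seteqP; split => y /=; [move=> h; split => k; case: (h k)|
  move=> [h1 h2] k; split].
Qed.

Lemma coord_meas (k : K) : measurable_fun [set: M] (fun y : M => y k).
Proof.
move=> _ A mA; rewrite setTI; apply: sub_sigma_algebra.
exists (fun k' => if k' == k then A else setT).
  by move=> k'; case: eqP.
apply/seteqP; split => y /=.
  by move/(_ k); rewrite eqxx.
by move=> Ay k'; case: eqP => // ->.
Qed.

Lemma atom_le_meas (u v : K) : measurable [set y : M | y u <= y v].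
Proof.
have := @measurable_realfun.measurable_fun_ler _ M R setT (fun y : M => y u) (fun y : M => y v)
  (coord_meas u) (coord_meas v) measurableT.
move=> /(_ [set true]) h.
have -> : [set y : M | y u <= y v] = setT `&` (fun y : M => y u <= y v) @^-1` [set true].
  by apply/seteqP; split => y /=; [move=> ->|case].
exact: h.
Qed.

Lemma atom_eq_meas (u : K) (r : R) : measurable [set y : M | y u = r].
Proof.
have := coord_meas u measurableT [set r] (measurable_set1 r).
by rewrite setTI.
Qed.

Lemma atom_lemma (I : finType) (at_ : I -> set M) (S : set M) :
  (forall a, measurable (at_ a)) ->
  (forall y y', (forall a, at_ a y <-> at_ a y') -> S y -> S y') ->
  measurable S.
Proof.
move=> mat inv.
pose prof (b : {ffun I -> bool}) : set M :=
  \big[setI/setT]_(a : I) (if b a then at_ a else ~` at_ a).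
have profP b y : prof b y <-> forall a, at_ a y <-> b a.
  rewrite /prof; split.
    rewrite -bigcap_seq => h a; have := h a (mem_index_enum a).
    by case: (b a) => H; split => // /(_ H).
  move=> h; rewrite -bigcap_seq => a _ /=.
  by case: (b a) (h a) => -[H1 H2]; [apply: H2| move=> /H1].
have -> : S = \big[setU/set0]_(b : {ffun I -> bool} |
       `[< exists y, S y /\ prof b y >]) prof b.
  apply/seteqP; split => y.
    move=> Sy; rewrite -bigcup_seq_cond.
    exists [ffun a => `[< at_ a y >]].
      apply/andP; split; first exact: mem_index_enum.
      apply/asboolP; exists y; split => //; apply/profP => a.
      by rewrite ffunE; split => [/asboolP|/asboolP].
    by apply/profP => a; rewrite ffunE; split => [/asboolP|/asboolP].
  rewrite -bigcup_seq_cond => -[b /andP [_ /asboolP [y0 [Sy0 py0]]] pb].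
  apply: (inv y0) => // a; move/profP: py0 => /(_ a) ->.
  by move/profP: pb => /(_ a) ->.
apply: bigsetU_measurable => b _; apply: bigsetI_measurable => a _.
by case: (b a); [exact: mat| apply: measurableC].
Qed.

End gen.

End part1.

Section part2.
Local Open Scope classical_set_scope.
Local Open Scope ring_scope.

Section exch.
Variables (R : realType) (K : finType) (dO : measure_display)
  (Omega : measurableType dO) (P : probability Omega R).
Local Notation M := (MV R K).

Definition vecf (X : K -> Omega -> R) : Omega -> M := fun om => (fun k => X k om).

Lemma preimage_rect (X : K -> Omega -> R) (A : K -> set R) :
  vecf X @^-1` [set y | forall k, A k (y k)] =
  \big[setI/setT]_(k : K) (X k @^-1` A k).
Proof.
apply/seteqP; split => om /=.
  by move=> h; rewrite -bigcap_seq => k _; exact: h.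
by rewrite -bigcap_seq => h k; exact: (h k (mem_index_enum k)).
Qed.

Lemma vecf_meas (X : K -> Omega -> R) : (forall k, measurable_fun setT (X k)) ->
  measurable_fun [set: Omega] (vecf X).
Proof.
move=> mX; apply: (@measurability _ _ Omega M setT (vecf X) (rect R K)) => //.
move=> _ [_ [A mA <-] <-]; rewrite setTI preimage_rect.
apply: bigsetI_measurable => k _.
by have := mX k measurableT (A k) (mA k); rewrite setTI.
Qed.

Lemma exch (X Y : K -> Omega -> R) :
  (forall k, measurable_fun setT (X k)) ->
  (forall k, measurable_fun setT (Y k)) ->
  (forall A : K -> set R, (forall k, measurable (A k)) ->
     P (\big[setI/setT]_k (X k @^-1` A k)) = (\prod_k P (X k @^-1` A k))%E) ->
  (forall A : K -> set R, (forall k, measurable (A k)) ->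
     P (\big[setI/setT]_k (Y k @^-1` A k)) = (\prod_k P (Y k @^-1` A k))%E) ->
  (forall k A, measurable A -> P (X k @^-1` A) = P (Y k @^-1` A)) ->
  forall B : set M, measurable B -> P (vecf X @^-1` B) = P (vecf Y @^-1` B).
Proof.
move=> mX mY iX iY mXY B mB.
have mXv := @vecf_meas X mX; have mYv := @vecf_meas Y mY.
have pm (f : Omega -> M) : measurable_fun setT f -> forall S : set M, measurable S ->
  measurable (f @^-1` S).
  by move=> mf S mS; have := mf measurableT S mS; rewrite setTI.
apply: (@dynkin_induction _ M (rect R K)
  (fun B => P (vecf X @^-1` B) = P (vecf Y @^-1` B))) => //.
- exact: rectI.
- move=> _ [A mA <-]; rewrite !preimage_rect iX // iY //.
  by apply: eq_bigr => k _; apply: mXY.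
- move=> S mS h; rewrite -!preimage_setC !probability_setC ?h //; exact: pm.
- move=> F mF tF h; rewrite !preimage_bigcup !measure_bigcup //.
  + by apply: eq_eseriesr => n _; apply: h.
  + by move=> n _; apply: pm.
  + apply/trivIsetP => i j _ _ ij; rewrite -preimage_setI.
    by move/trivIsetP: tF => /(_ i j I I ij) ->; rewrite preimage_set0.
  + by move=> n _; apply: pm.
  + apply/trivIsetP => i j _ _ ij; rewrite -preimage_setI.
    by move/trivIsetP: tF => /(_ i j I I ij) ->; rewrite preimage_set0.
Qed.

End exch.

End part2.

Section part3.
Local Set Implicit Arguments.
Local Unset Strict Implicit.
Local Open Scope ring_scope.

Definition selp n (S : {set 'I_n}) (sg : {perm 'I_n}) : option 'I_n :=
  [pick i in S | [forall k in S, (sg i <= sg k)%N]].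
Arguments selp {n}.

Lemma selp_uniq n (S : {set 'I_n}) (sg : {perm 'I_n}) i j :
  i \in S -> [forall k in S, (sg i <= sg k)%N] ->
  j \in S -> [forall k in S, (sg j <= sg k)%N] -> i = j.
Proof.
move=> iS /forall_inP hi jS /forall_inP hj.
apply: (@perm_inj _ sg); apply: val_inj; apply/eqP.
by rewrite eqn_leq hi // hj.
Qed.

Lemma selp_perm n (S : {set 'I_n}) (sg p : {perm 'I_n}) :
  selp [set i | p i \in S] (p * sg)%g = omap (p^-1)%g (selp S sg).
Proof.
have key i : i \in [set i | p i \in S] ->
    [forall k in [set i | p i \in S], ((p * sg)%g i <= (p * sg)%g k)%N] ->
    [forall k in S, (sg (p i) <= sg k)%N].
  move=> _ /forall_inP hi; apply/forall_inP => k kS.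
  have := hi (p^-1 k)%g; rewrite inE permKV => /(_ kS).
  by rewrite !permM permKV.
have key2 j : j \in S -> [forall k in S, (sg j <= sg k)%N] ->
    [forall k in [set i | p i \in S],
      ((p * sg)%g (p^-1 j)%g <= (p * sg)%g k)%N].
  move=> _ /forall_inP hj; apply/forall_inP => k; rewrite inE => kS.
  by rewrite !permM permKV; apply: hj.
rewrite /selp; case: pickP => [i /andP [iS hi]|hn].
  case: pickP => [j /andP [jS hj]|hn2] /=.
  - congr Some; apply: (@perm_inj _ p); rewrite permKV.
    have iS' := iS; rewrite inE in iS'.
    exact: (selp_uniq iS' (key i iS hi) jS hj).
  - exfalso; have iS' := iS; rewrite inE in iS'.
    by move: (hn2 (p i)); rewrite iS' (key i iS hi).
case: pickP => [j /andP [jS hj]|//] /=; exfalso.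
move: (hn (p^-1 j)%g); rewrite inE permKV jS /=.
by rewrite (key2 j jS hj).
Qed.

Lemma selp_some n (S : {set 'I_n}) (sg : {perm 'I_n}) :
  S != finset.set0 -> exists i, selp S sg = Some i.
Proof.
case/finset.set0Pn => i0 i0S; rewrite /selp; case: pickP => [i _|hn]; first by exists i.
exfalso; case: (arg_minnP (fun k => sg k) i0S) => i iS hi.
have iS' : i \in S := iS; move: (hn i) => /=; rewrite iS' /=.
by suff -> : [forall k in S, (sg i <= sg k)%N] by []; apply/forall_inP.
Qed.

Lemma near_nonempty (R : realType) n (f : 'I_n -> R) : (0 < n)%N ->
  [set i | [forall k, f i <= f k]] != finset.set0.
Proof.
move=> n0; apply/finset.set0Pn.
have i0 : 'I_n by exact: Ordinal n0.
case: (@arg_minP _ _ _ i0 xpredT f isT) => i _ hi.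
by exists i; rewrite inE; apply/forallP => k; apply: hi.
Qed.

End part3.

Section part4.
Local Set Implicit Arguments.
Local Unset Strict Implicit.

Lemma mod_split a m : a %% 2 ^ m.+1 = odd (a %/ 2 ^ m) * 2 ^ m + a %% 2 ^ m.
Proof.
rewrite {1}(divn_eq (a %% 2 ^ m.+1) (2 ^ m)) expnS -modn_divl modn2.
congr (_ + _); rewrite modn_dvdm //; exact: dvdn_mull.
Qed.

Lemma enc_inj w a b : 0 < a <= 2 ^ w -> 0 < b <= 2 ^ w ->
  (forall j, j < w -> enc_bit a j.+1 = enc_bit b j.+1) -> a = b.
Proof.
move=> /andP [a0 aw] /andP [b0 bw] h.
have hm : forall m, m <= w -> a %% 2 ^ m = b %% 2 ^ m.
  elim => [|m IH] mw; first by rewrite expn0 !modn1.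
  rewrite !mod_split IH ?(ltnW mw) //.
  by have := h m mw; rewrite /enc_bit /= => ->.
have := hm w (leqnn w).
have w0 : 0 < 2 ^ w by rewrite expn_gt0.
have [alt|aeq] : a < 2 ^ w \/ a = 2 ^ w by lia.
  have [blt|beq] : b < 2 ^ w \/ b = 2 ^ w by lia.
    by rewrite !modn_small.
  by rewrite modn_small // beq modnn => a0'; move: a0; rewrite a0'.
have [blt|beq] : b < 2 ^ w \/ b = 2 ^ w by lia.
  by rewrite (modn_small blt) aeq modnn => b0'; move: b0; rewrite -b0'.
by rewrite aeq beq.
Qed.

Definition bits w T (i : {ffun 'I_T -> 'I_(2 ^ w)}) : {ffun 'I_(T * w) -> bool} :=
  [ffun l : 'I_(T * w) => match insub (l %/ w) with
     | Some t => enc_bit (i t).+1 (l %% w).+1 | None => false end].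

Lemma bits_inj w T : 0 < w -> injective (@bits w T).
Proof.
move=> w0 i i' h; apply/ffunP => t; apply: val_inj.
suff : (i t).+1 = (i' t).+1 by case.
apply: (@enc_inj w); rewrite ?ltn_ord //.
move=> j jw.
have lT : t * w + j < T * w.
  have := ltn_ord t; nia.
have := congr1 (fun f : {ffun _ -> bool} => f (Ordinal lT)) h; rewrite /bits !ffunE /=.
have -> : (t * w + j) %/ w = t by rewrite divnMDl // divn_small // addn0.
have -> : (t * w + j) %% w = j by rewrite modnMDl modn_small.
by rewrite valK.
Qed.

Lemma card_bits_full w T : #|{ffun 'I_T -> 'I_(2 ^ w)}| = #|{ffun 'I_(T * w) -> bool}|.
Proof. by rewrite !card_ffun !card_ord card_bool -expnM mulnC. Qed.

Lemma card_bits_eq w T (v : {ffun 'I_(T * w) -> bool}) : 0 < w ->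
  #|[set i | bits i == v]| = 1.
Proof.
move=> w0; have inj := @bits_inj w T w0.
have onto := inj_card_onto inj (eq_leq (esym (card_bits_full w T))) v.
case/codomP: onto => i0 ->; transitivity #|[set i0]|; last exact: cards1. apply: eq_card => i.
by rewrite !inE (inj_eq inj).
Qed.

Definition tog m (l : 'I_m) (f : {ffun 'I_m -> bool}) : {ffun 'I_m -> bool} :=
  [ffun k => if k == l then ~~ f k else f k].

Lemma tog_inj m (l : 'I_m) : injective (tog l).
Proof.
move=> f g h; apply/ffunP => k; have := congr1 (fun f : {ffun _ -> bool} => f k) h.
by rewrite !ffunE; case: eqP => _ //; move/negbLR; rewrite negbK.
Qed.

Lemma card_half m (l : 'I_m) (b : bool) :
  2 * #|[set f : {ffun 'I_m -> bool} | f l == b]| = 2 ^ m.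
Proof.
have e1 : #|[set f : {ffun 'I_m -> bool} | f l == b]| =
          #|[set f : {ffun 'I_m -> bool} | f l == ~~ b]|.
  have onto := inj_card_onto (@tog_inj _ l) (leqnn _).
  transitivity #|[preim tog l of [pred f : {ffun 'I_m -> bool} | f l == ~~ b]]|.
    apply: eq_card => f; rewrite !inE /tog ffunE eqxx.
    by case: (f l); case: b.
  rewrite card_preim; last exact: (@tog_inj _ l).
  apply: eq_card => f.
  by rewrite !inE onto.
have e2 : #|[set f : {ffun 'I_m -> bool} | f l == b]| +
          #|[set f : {ffun 'I_m -> bool} | f l == ~~ b]| = 2 ^ m.
  have := cardsC [set f : {ffun 'I_m -> bool} | f l == b].
  rewrite card_ffun card_bool card_ord => <-; congr (_ + _).
  apply: eq_card => f; rewrite !inE.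
  by case: (f l); case: (b).
by rewrite mul2n -addnn {2}e1 e2.
Qed.

End part4.

Section part5.
Local Set Implicit Arguments.
Local Unset Strict Implicit.
Local Open Scope classical_set_scope.
Local Open Scope ring_scope.

Lemma eucl_meas (R : realType) d (x : d.-tuple R) :
  measurable_fun [set: d.-tuple R] (fun y => eucl_dist x y).
Proof.
rewrite /eucl_dist.
apply: (measurableT_comp (f := @Num.sqrt R)).
  exact: measurable_realfun.continuous_measurable_fun (@sqrt_continuous R).
apply: measurable_sum => k.
apply: measurable_realfun.measurable_funX; apply: measurable_realfun.measurable_funB => //.
exact: measurable_tnth.
Qed.

Lemma P_bigU (R : realType) dO (Omega : measurableType dO) (P : probability Omega R)
  (I : choiceType) (r : seq I) (Q : pred I) (F : I -> set Omega) :
  uniq r -> (forall i, measurable (F i)) ->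
  (forall i j, i != j -> F i `&` F j = set0) ->
  P (\big[setU/set0]_(i <- r | Q i) F i) = (\sum_(i <- r | Q i) P (F i))%E.
Proof.
move=> + mF dF; elim: r => [|i r IH]; first by rewrite !big_nil measure0.
rewrite /= => /andP [ir ur]; rewrite !big_cons.
case: (Q i); last exact: IH ur.
rewrite measureU //; first by congr (_ + _)%E; exact: IH ur.
- exact: (@bigsetU_measurable _ Omega _ r Q F (fun j _ => mF j)).
- apply/seteqP; split => // om [Fi]; rewrite -(bigcup_seq_cond r F Q) => -[j /andP [jr _] Fj].
  have ij : i != j by apply: contraNneq ir => ->.
  by have := dF _ _ ij; move/seteqP => [+ _] => /(_ om (conj Fi Fj)).
Qed.

End part5.

Section part6.
Local Set Implicit Arguments.
Local Unset Strict Implicit.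
Local Open Scope classical_set_scope.
Local Open Scope ring_scope.

Section main.
Variables (R : realType) (d w T : nat) (hw : (1 <= w)%N) (hT : (1 <= T)%N)
    (G : probability (d.-tuple R) R)
    (dO : measure_display) (Omega : measurableType dO) (P : probability Omega R)
    (s : 'I_T -> 'I_(2 ^ w) -> Omega -> d.-tuple R)
    (sigma : 'I_T -> Omega -> {perm 'I_(2 ^ w)}).
Hypotheses (s_meas : forall t i, measurable_fun setT (s t i))
    (s_distr : forall t i (A : set (d.-tuple R)), measurable A ->
        P (s t i @^-1` A) = G A)
    (sigma_meas : forall t (p : {perm 'I_(2 ^ w)}),
        measurable (sigma t @^-1` [set p]))
    (sigma_unif : forall t (p : {perm 'I_(2 ^ w)}),
        P (sigma t @^-1` [set p]) = ((#|{perm 'I_(2 ^ w)}|%:R)^-1)%:E)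
    (indep : mutually_independent P
        (fun k : ('I_T * 'I_(2 ^ w)) + 'I_T =>
           match k with
           | inl (t, i) => [set s t i @^-1` A | A in [set A | measurable A]]
           | inr t => [set sigma t @^-1` B | B in [set: set {perm 'I_(2 ^ w)}]]
           end)).
Variable (x : d.-tuple R).

Local Notation n := (2 ^ w)%N.
Local Notation K := (('I_T * 'I_n) + 'I_T)%type.
Local Notation M := (MV R K).

Definition code (p : {perm 'I_n}) : R := (enum_rank p : nat)%:R.

Lemma code_inj : injective code.
Proof.
move=> p q; rewrite /code => /eqP; rewrite eqr_nat => /eqP h.
by apply: enum_rank_inj; apply: val_inj.
Qed.

Definition Xf (k : K) (om : Omega) : R :=
  match k with
  | inl (t, i) => eucl_dist x (s t i om)
  | inr t => code (sigma t om)
  end.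

Local Notation Xv := (@vecf R K _ Omega Xf).

Definition near (y : M) (t : 'I_T) : {set 'I_n} :=
  [set i | [forall k, y (inl (t, i)) <= y (inl (t, k))]].
Definition sig (y : M) (t : 'I_T) : {perm 'I_n} :=
  odflt 1%g [pick p | code p == y (inr t)].
Definition chI (y : M) (t : 'I_T) : option 'I_n := selp (near y t) (sig y t).
Definition C (i : {ffun 'I_T -> 'I_n}) : set M := [set y | forall t, chI y t = Some (i t)].

Lemma sig_code (y : M) t p : y (inr t) = code p -> sig y t = p.
Proof.
move=> e; rewrite /sig; case: pickP => [q /eqP|/(_ p)]; last by rewrite e eqxx.
by rewrite e => /code_inj ->.
Qed.

Lemma chosen_chI om t :
  chosen_index x (s t ^~ om) (sigma t om) =
  oapp (fun i : 'I_n => (val i).+1) 0%N (chI (Xv om) t).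
Proof.
by rewrite /chI (@sig_code (Xv om) t (sigma t om)).
Qed.

Lemma sig_pre_meas t (B : set {perm 'I_n}) : measurable (sigma t @^-1` B).
Proof.
have -> : sigma t @^-1` B = \big[setU/set0]_(p | `[< B p >]) (sigma t @^-1` [set p]).
  apply/seteqP; split => om.
    move=> Bom; rewrite -bigcup_seq_cond; exists (sigma t om) => //.
    by apply/andP; split; [exact: mem_index_enum| apply/asboolP].
  by rewrite -bigcup_seq_cond => -[p /andP [_ /asboolP Bp] /= ->].
by apply: bigsetU_measurable => p _; apply: sigma_meas.
Qed.

Lemma C_meas i : measurable (C i).
Proof.
pose at_ (a : (K * K) + ('I_T * {perm 'I_n})) : set M :=
  match a with
  | inl (u, v) => [set y : M | y u <= y v]
  | inr (t, p) => [set y : M | y (inr t) = code p]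
  end.
apply: (@atom_lemma R K _ at_).
  by case => [[u v]|[t p]]; [exact: atom_le_meas| exact: atom_eq_meas].
move=> y y' h Cy t; rewrite -(Cy t) /chI.
have -> : near y' t = near y t.
  apply/setP => j; rewrite !inE; apply: eq_forallb => k.
  by have := h (inl (inl (t, j), inl (t, k))) => /= e; apply/idP/idP => /e.
have -> : sig y' t = sig y t.
  rewrite /sig; congr odflt; apply: eq_pick => p.
  have := h (inr (t, p)) => /= e.
  by apply/eqP/eqP => [/esym/e/esym|/esym/e/esym].
by [].
Qed.


Definition Ecl : K -> set (set Omega) := fun k : K =>
  match k with
  | inl (t, i) => [set s t i @^-1` A | A in [set A | measurable A]]
  | inr t => [set sigma t @^-1` B | B in [set: set {perm 'I_(2 ^ w)}]]
  end.

Lemma indep_perm (Z : K -> Omega -> R) (phi : {perm K}) :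
  (forall k A, measurable A -> Ecl (phi k) (Z k @^-1` A)) ->
  forall A : K -> set R, (forall k, measurable (A k)) ->
     P (\big[setI/setT]_k (Z k @^-1` A k)) = (\prod_k P (Z k @^-1` A k))%E.
Proof.
move=> hZ A mA.
have := @indep (setTfor K) (fun k' => Z ((phi^-1)%g k') @^-1` A ((phi^-1)%g k')).
have -> : \bigcap_(k in [set k | k \in setTfor K])
      Z ((phi^-1)%g k) @^-1` A ((phi^-1)%g k) = \big[setI/setT]_k (Z k @^-1` A k).
  rewrite -bigcap_seq; apply/seteqP; split => om /= h k _.
    have := h (phi k); rewrite permK; apply; by rewrite /mkset /= inE.
  exact: h _ (mem_index_enum _).
move=> H; rewrite H; last by move=> k _; have := hZ ((phi^-1)%g k) _ (mA _); rewrite permKV; exact.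
rewrite (eq_bigl xpredT) => [|k]; last by rewrite /mkset /= inE.
rewrite (reindex_inj (@perm_inj _ phi)) /=.
by apply: eq_bigr => k _; rewrite permK.
Qed.

Lemma Xf_meas k : measurable_fun setT (Xf k).
Proof.
case: k => [[t i]|t] /=.
  exact: (measurableT_comp (@eucl_meas R d x) (s_meas t i)).
by move=> _ A _; rewrite setTI; exact: sig_pre_meas (code @^-1` A).
Qed.

Lemma Xf_cls k A : measurable A -> Ecl k (Xf k @^-1` A).
Proof.
case: k => [[t i]|t] mA /=.
  exists ((fun y => eucl_dist x y) @^-1` A) => //.
  by have := @eucl_meas R d x measurableT A mA; rewrite setTI.
by exists (code @^-1` A).
Qed.

Lemma Xf_indep (A : K -> set R) : (forall k, measurable (A k)) ->
     P (\big[setI/setT]_k (Xf k @^-1` A k)) = (\prod_k P (Xf k @^-1` A k))%E.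
Proof. by apply: (@indep_perm Xf 1%g) => k B mB; rewrite perm1; exact: Xf_cls. Qed.


Section relabel.
Variable pi : 'I_T -> {perm 'I_n}.

Definition phif (k : K) : K :=
  match k with inl (t, i) => inl (t, pi t i) | inr t => inr t end.
Lemma phif_inj : injective phif.
Proof.
by case => [[t i]|t] [[t' i']|t'] //= [] -> /perm_inj ->.
Qed.
Definition phi : {perm K} := perm phif_inj.

Definition Yf (k : K) (om : Omega) : R :=
  match k with
  | inl (t, i) => Xf (inl (t, pi t i)) om
  | inr t => code ((pi t * sigma t om)%g)
  end.

Lemma Yf_meas k : measurable_fun setT (Yf k).
Proof.
case: k => [[t i]|t] /=; first exact: Xf_meas.
by move=> _ A _; rewrite setTI; exact: sig_pre_meas ((fun p => code (pi t * p)%g) @^-1` A).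
Qed.

Lemma Yf_indep (A : K -> set R) : (forall k, measurable (A k)) ->
     P (\big[setI/setT]_k (Yf k @^-1` A k)) = (\prod_k P (Yf k @^-1` A k))%E.
Proof.
apply: (@indep_perm Yf phi) => k B mB; rewrite permE.
case: k => [[t i]|t] /=; first exact: (Xf_cls (inl (t, pi t i)) mB).
by exists ((fun p => code (pi t * p)%g) @^-1` B).
Qed.

End relabel.

Lemma sig_prob t (B : set {perm 'I_n}) :
  P (sigma t @^-1` B) = (\sum_(p | `[< B p >]) (#|{perm 'I_n}|%:R^-1)%:E)%E.
Proof.
have -> : sigma t @^-1` B = \big[setU/set0]_(p | `[< B p >]) (sigma t @^-1` [set p]).
  apply/seteqP; split => om.
    move=> Bom; rewrite -bigcup_seq_cond; exists (sigma t om) => //.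
    by apply/andP; split; [exact: mem_index_enum| apply/asboolP].
  by rewrite -bigcup_seq_cond => -[p /andP [_ /asboolP Bp] /= ->].
rewrite P_bigU //; first by apply: eq_bigr => p _; apply: sigma_unif.
- exact: index_enum_uniq.
- move=> p q pq; apply/seteqP; split => // om [/= -> e]; by move: pq; rewrite e eqxx.
Qed.

Lemma XY_marg pi k (A : set R) : measurable A ->
  P (Xf k @^-1` A) = P (Yf pi k @^-1` A).
Proof.
move=> mA; case: k => [[t i]|t] /=.
  have mA' : measurable ((fun y => eucl_dist x y) @^-1` A).
    by have := @eucl_meas R d x measurableT A mA; rewrite setTI.
  have e : forall j, Xf (inl (t, j)) @^-1` A = s t j @^-1` ((fun y => eucl_dist x y) @^-1` A) by [].
  by rewrite e e !s_distr.
have e1 : Xf (inr t) @^-1` A = sigma t @^-1` (code @^-1` A) by [].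
have e2 : Yf pi (inr t) @^-1` A = sigma t @^-1` ((fun p => code (pi t * p)%g) @^-1` A) by [].
rewrite e1 e2 !sig_prob (reindex_inj (mulgI (pi t))) /=.
by apply: eq_bigl => p.
Qed.

Lemma chI_Y pi om t :
  chI (@vecf R K _ Omega (Yf pi) om) t = omap ((pi t)^-1)%g (chI (Xv om) t).
Proof.
rewrite /chI -selp_perm.
have -> : sig (@vecf R K _ Omega (Yf pi) om) t = (pi t * sigma t om)%g.
  by apply: sig_code.
congr selp; last by rewrite (@sig_code (Xv om) t (sigma t om)).
apply/finset.setP => j; rewrite !inE.
apply/forallP/forallP => /= h k.
  by have := h ((pi t)^-1 k)%g; rewrite /vecf /= permKV.
exact: h.
Qed.

Lemma preY pi (i : {ffun 'I_T -> 'I_n}) :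
  @vecf R K _ Omega (Yf pi) @^-1` C i = Xv @^-1` C [ffun t => pi t (i t)].
Proof.
apply/seteqP; split => om /= h t; have := h t; rewrite chI_Y ?ffunE.
  by case: (chI (Xv om) t) => //= j [<-]; rewrite permKV.
by move=> ->; rewrite /= permK.
Qed.

Lemma Q_const (i j : {ffun 'I_T -> 'I_n}) :
  P (Xv @^-1` C i) = P (Xv @^-1` C j).
Proof.
pose pi t := tperm (i t) (j t).
rewrite (@exch R K dO Omega P Xf (Yf pi) Xf_meas (Yf_meas pi) Xf_indep (Yf_indep pi)
   (@XY_marg pi) (C i) (C_meas i)).
rewrite preY; congr (P (_ @^-1` C _)); apply/ffunP => t; rewrite ffunE.
by rewrite /pi tpermL.
Qed.

Lemma n_gt0 : (0 < n)%N. Proof. by rewrite expn_gt0. Qed.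
Definition i0 : 'I_n := Ordinal n_gt0.

Lemma C_exists om : exists i, C i (Xv om).
Proof.
have h t : exists j, chI (Xv om) t = Some j.
  apply: selp_some; apply: near_nonempty; exact: n_gt0.
exists [ffun t => odflt i0 (chI (Xv om) t)] => t; rewrite ffunE.
by case: (h t) => j ->.
Qed.

Lemma C_disj i j : i != j -> Xv @^-1` C i `&` Xv @^-1` C j = set0.
Proof.
move=> ij; apply/seteqP; split => // om [/= hi hj]; move: ij.
suff -> : i = j by rewrite eqxx.
by apply/ffunP => t; have := hi t; rewrite hj => -[].
Qed.

Lemma C_preim_meas i : measurable (Xv @^-1` C i).
Proof.
by have := @vecf_meas R K dO Omega Xf Xf_meas measurableT (C i) (C_meas i); rewrite setTI.
Qed.

Definition cbv (om : Omega) : {ffun 'I_(T * w) -> bool} :=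
  [ffun l => code_bit x (fun t i => s t i om) (fun t => sigma t om) l].

Lemma cbv_bits om i : C i (Xv om) -> cbv om = bits i.
Proof.
move=> h; apply/ffunP => l; rewrite !ffunE /code_bit.
case: insub => // t; rewrite chosen_chI h.
by [].
Qed.

Lemma event_eq (Phi : pred {ffun 'I_(T * w) -> bool}) :
  [set om | Phi (cbv om)] =
  \big[setU/set0]_(i | Phi (bits i)) (Xv @^-1` C i).
Proof.
apply/seteqP; split => om.
  move=> /= h; case: (C_exists om) => i hi; rewrite -bigcup_seq_cond.
  exists i => //; apply/andP; split; first exact: mem_index_enum.
  by rewrite -(cbv_bits hi).
rewrite -bigcup_seq_cond => -[i /andP [_ hP] hi].
by rewrite /= (cbv_bits hi).
Qed.

Lemma event_prob (Phi : pred {ffun 'I_(T * w) -> bool}) :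
  P [set om | Phi (cbv om)] =
  (P (Xv @^-1` C [ffun => i0]) *+ #|[pred i | Phi (bits i)]|)%E.
Proof.
rewrite event_eq P_bigU //.
- transitivity (\sum_(i in [pred i | Phi (bits i)]) P (Xv @^-1` C [ffun => i0]))%E;
    last exact: sumr_const.
  by apply: eq_bigr => i _; exact: Q_const.
- exact: index_enum_uniq.
- exact: C_preim_meas.
- exact: C_disj.
Qed.

Lemma card_bits_pred (Phi : pred {ffun 'I_(T * w) -> bool}) :
  #|[pred i : {ffun 'I_T -> 'I_n} | Phi (bits i)]| = #|Phi|.
Proof.
have inj := @bits_inj w T hw.
have onto := inj_card_onto inj (eq_leq (esym (card_bits_full w T))).
transitivity #|[predI codom (@bits w T) & Phi]|.
  by rewrite -(card_preim inj).
by apply: eq_card => f; rewrite !inE onto.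
Qed.

Lemma main_lemma (v : 'I_(T * w) -> bool) :
    P [set om | forall l, code_bit x (fun t i => s t i om) (fun t => sigma t om) l = v l]
    = (\prod_(l < T * w)
         P [set om | code_bit x (fun t i => s t i om) (fun t => sigma t om) l = v l])%E.
Proof.
set q := P (Xv @^-1` C [ffun => i0]).
have qfin : q \is a fin_num.
  by apply: fin_num_measure; exact: C_preim_meas.
set r := fine q.
have qr : q = r%:E by rewrite /r fineK.
have NT : #|{ffun 'I_(T * w) -> bool}| = (2 ^ (T * w))%N.
  by rewrite card_ffun card_bool card_ord.
have h1 : r *+ (2 ^ (T * w))%N = 1.
  have := event_prob xpredT.
  have -> : [set om | xpredT (cbv om)] = setT by apply/seteqP; split.
  have -> : #|[pred: {ffun 'I_T -> 'I_n} | true]| = (2 ^ (T * w))%N.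
    by rewrite -NT -card_bits_full; apply: eq_card.
  by rewrite probability_setT -/q qr -EFin_natmul => -[].
set vf : {ffun 'I_(T * w) -> bool} := [ffun l => v l].
have hv : [set om | forall l, code_bit x (fun t i => s t i om) (fun t => sigma t om) l = v l]
    = [set om | (fun f : {ffun 'I_(T * w) -> bool} => f == vf) (cbv om)].
  apply/seteqP; split => om /=.
    by move=> h; apply/eqP/ffunP => l; rewrite !ffunE h.
  by move=> /eqP /ffunP h l; have := h l; rewrite !ffunE.
have hl l : [set om | code_bit x (fun t i => s t i om) (fun t => sigma t om) l = v l]
    = [set om | (fun f : {ffun 'I_(T * w) -> bool} => f l == v l) (cbv om)].
  by apply/seteqP; split => om /=; rewrite ffunE => /eqP.
have hf l : P [set om | code_bit x (fun t i => s t i om) (fun t => sigma t om) l = v l]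
    = (2^-1 : R)%:E.
  rewrite hl.
  have /= -> := event_prob (fun f : {ffun 'I_(T * w) -> bool} => f l == v l).
  have /= eN := card_bits_pred (fun f : {ffun 'I_(T * w) -> bool} => f l == v l).
  set N := #|_|.
  have hN : (2 * N)%N = (2 ^ (T * w))%N.
    rewrite /N eN -(card_half l (v l)); congr (_ * _)%N.
    by apply: eq_card => f; rewrite !inE.
  rewrite -/q qr -EFin_natmul; congr EFin.
  move: h1; rewrite -hN mulnC mulrnA mulr2n.
  set y := r *+ N => hy.
  by apply: (@mulIf _ 2); rewrite ?pnatr_eq0 // mulVf ?pnatr_eq0 // mulr_natr mulr2n.
rewrite hv.
have /= -> := event_prob (fun f : {ffun 'I_(T * w) -> bool} => f == vf).
rewrite [X in (_ *+ X)%E](_ : _ = 1%N); last first.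
  transitivity #|[set i | bits i == vf]%SET|; last exact: card_bits_eq vf hw.
  by apply: eq_card => i; rewrite !inE.
under eq_bigr do rewrite hf.
rewrite prodEFin prodr_const card_ord -/q qr -EFin_natmul; congr EFin.
rewrite mulr1n exprVn -natrX.
apply: (@mulIf _ ((2 ^ (T * w))%N%:R)); first by rewrite pnatr_eq0 expn_eq0.
by rewrite mulVf ?pnatr_eq0 ?expn_eq0 // mulr_natr h1.
Qed.

End main.

End part6.

Local Open Scope classical_set_scope.
Local Open Scope ring_scope.

Theorem theorem1 (R : realType) (d w T : nat) (hw : (1 <= w)%N) (hT : (1 <= T)%N)
    (G : probability (d.-tuple R) R)
    (dO : measure_display) (Omega : measurableType dO) (P : probability Omega R)
    (s : 'I_T -> 'I_(2 ^ w) -> Omega -> d.-tuple R)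
    (sigma : 'I_T -> Omega -> {perm 'I_(2 ^ w)})
    (s_meas : forall t i, measurable_fun setT (s t i))
    (s_distr : forall t i (A : set (d.-tuple R)), measurable A ->
        P (s t i @^-1` A) = G A)
    (sigma_meas : forall t (p : {perm 'I_(2 ^ w)}),
        measurable (sigma t @^-1` [set p]))
    (sigma_unif : forall t (p : {perm 'I_(2 ^ w)}),
        P (sigma t @^-1` [set p]) = ((#|{perm 'I_(2 ^ w)}|%:R)^-1)%:E)
    (indep : mutually_independent P
        (fun k : ('I_T * 'I_(2 ^ w)) + 'I_T =>
           match k with
           | inl (t, i) => [set s t i @^-1` A | A in [set A | measurable A]]
           | inr t => [set sigma t @^-1` B | B in [set: set {perm 'I_(2 ^ w)}]]
           end))
    (x : d.-tuple R) :
  forall v : 'I_(T * w) -> bool,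
    P [set om | forall l, code_bit x (fun t i => s t i om) (fun t => sigma t om) l = v l]
    = (\prod_(l < T * w)
         P [set om | code_bit x (fun t i => s t i om) (fun t => sigma t om) l = v l])%E.
Proof.
by move=> v; exact: (main_lemma hw s_meas s_distr sigma_meas sigma_unif indep x v).
Qed.
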